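(* If $\dim\mathcal H=\dim\mathcal J=\infty$, then $\mathcal T(\mathcal H)\hat\otimes\mathcal T(\mathcal J)\subsetneq\mathcal T(\mathcal H\otimes\mathcal J)$; in particular $\hat{\mathcal S}(\mathcal H\otimes\mathcal J)\subsetneq\mathcal S(\mathcal H\otimes\mathcal J)$, i.e. there exist density operators on $\mathcal H\otimes\mathcal J$ that are not cross states.
   Context: $\mathcal H,\mathcal J$ separable complex Hilbert spaces; $\mathcal T(\cdot)$ trace class with trace norm $\|\cdot\|_1$; $\mathcal S(\cdot)$ density operators. The cross trace class $\mathcal T(\mathcal H)\hat\otimes\mathcal T(\mathcal J)$ is the set of $C\in\mathcal T(\mathcal H\otimes\mathcal J)$ admitting an expansion $C=\sum_kr_kX_k\otimes Y_k$ (trace-norm convergent) with $r_k\ge0$, $\sum r_k<\infty$, $X_k\in\mathcal T(\mathcal H)$, $Y_k\in\mathcal T(\mathcal J)$, $\|X_k\|_1\|Y_k\|_1=1$. $\hat{\mathcal S}(\mathcal H\otimes\mathcal J)=\mathcal S(\mathcal H\otimes\mathcal J)\cap(\mathcal T(\mathcal H)\hat\otimes\mathcal T(\mathcal J))$ (cross states). *)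

(* Defs.v *)
From Stdlib Require Import Reals Cantor.
From Coquelicot Require Import Coquelicot.

Open Scope R_scope.

(* Hilbert spaces l^2(I) over C, for a countable index type I given    *)
(* together with an enumeration en : nat -> I (a bijection in all      *)
(* instances below) and a decidable equality (to form the standard     *)
(* orthonormal basis).                                                 *)
(* Every infinite-dimensional separable complex Hilbert space is        *)
(* unitarily isomorphic to l^2(nat); H (x) J is then l^2(nat * nat).    *)

Definition vec (I : Type) := I -> C.
Definition op (I : Type) := vec I -> vec I.

Section L2.
Variables (I : Type) (en : nat -> I) (dec : forall a b : I, {a = b} + {a <> b}).

Definition l2 (x : vec I) : Prop := ex_series (fun n => (Cmod (x (en n)))^2).

Definition l2norm (x : vec I) : R := sqrt (Series (fun n => (Cmod (x (en n)))^2)).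

(* inner product <x, y> = sum_i conj(x_i) y_i (antilinear in the first slot) *)
Definition ip (x y : vec I) : C :=
  (Series (fun n => Re (Cmult (Cconj (x (en n))) (y (en n)))),
   Series (fun n => Im (Cmult (Cconj (x (en n))) (y (en n))))).

Definition vadd (x y : vec I) : vec I := fun i => Cplus (x i) (y i).
Definition vscal (a : C) (x : vec I) : vec I := fun i => Cmult a (x i).

Definition ebasis (i : I) : vec I := fun j => if dec i j then RtoC 1 else RtoC 0.

(* bounded linear operator on l^2(I) (only its action on l^2 matters) *)
Definition is_linear (A : op I) : Prop :=
  forall x y a, l2 x -> l2 y ->
    forall i, A (vadd x (vscal a y)) i = Cplus (A x i) (Cmult a (A y i)).

Definition is_bounded (A : op I) : Prop :=
  (forall x, l2 x -> l2 (A x)) /\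
  exists M, forall x, l2 x -> l2norm (A x) <= M * l2norm x.

Definition bop (A : op I) : Prop := is_linear A /\ is_bounded A.

Definition adjoint (A B : op I) : Prop :=
  bop B /\ forall x y, l2 x -> l2 y -> ip (B x) y = ip x (A y).

Definition positive (P : op I) : Prop :=
  forall x, l2 x -> Im (ip x (P x)) = 0 /\ 0 <= Re (ip x (P x)).

(* trace norm: ||A||_1 = Tr |A| where |A| = (A^* A)^{1/2} is the (unique)
   positive square root of A^* A, and Tr is computed in the standard basis. *)
Definition tnorm (A : op I) (t : R) : Prop :=
  bop A /\
  exists B P : op I,
    adjoint A B /\ bop P /\ positive P /\
    (forall x, l2 x -> forall i, P (P x) i = B (A x) i) /\
    is_series (fun n => Re (ip (ebasis (en n)) (P (ebasis (en n))))) t.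

Definition trace_class (A : op I) : Prop := exists t, tnorm A t.

Definition has_trace (A : op I) (tau : C) : Prop :=
  is_series (fun n => Re (ip (ebasis (en n)) (A (ebasis (en n))))) (Re tau) /\
  is_series (fun n => Im (ip (ebasis (en n)) (A (ebasis (en n))))) (Im tau).

Definition density (rho : op I) : Prop :=
  trace_class rho /\ positive rho /\ has_trace rho (RtoC 1).

Definition osub (A B : op I) : op I := fun x i => Cminus (A x i) (B x i).

End L2.

Definition nat_dec : forall a b : nat, {a = b} + {a <> b} := Nat.eq_dec.

Definition pair_dec : forall a b : nat * nat, {a = b} + {a <> b}.
Proof. decide equality; apply Nat.eq_dec. Defined.

Definition TC1 (A : op nat) := trace_class nat (fun n : nat => n) nat_dec A.
Definition tnorm1 (A : op nat) (t : R) := tnorm nat (fun n : nat => n) nat_dec A t.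

Definition TC2 (A : op (nat * nat)) := trace_class (nat * nat) Cantor.of_nat pair_dec A.
Definition tnorm2 (A : op (nat * nat)) (t : R) := tnorm (nat * nat) Cantor.of_nat pair_dec A t.
Definition density2 (rho : op (nat * nat)) := density (nat * nat) Cantor.of_nat pair_dec rho.

(* X (x) Y on l^2(nat * nat): (X (x) Y) = (X (x) 1)(1 (x) Y) *)
Definition tens (X Y : op nat) : op (nat * nat) :=
  fun x p => let (i, j) := p in X (fun i' => Y (fun j' => x (i', j')) j) i.

Fixpoint psum (r : nat -> R) (X Y : nat -> op nat) (N : nat) : op (nat * nat) :=
  match N with
  | O => fun _ _ => RtoC 0
  | S N' => fun x p => Cplus (psum r X Y N' x p) (Cmult (RtoC (r N')) (tens (X N') (Y N') x p))
  end.

Definition cross (Cop : op (nat * nat)) : Prop :=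
  TC2 Cop /\
  exists (r : nat -> R) (X Y : nat -> op nat),
    (forall k, 0 <= r k) /\ ex_series r /\
    (forall k, exists a b, tnorm1 (X k) a /\ tnorm1 (Y k) b /\ a * b = 1) /\
    (forall eps, 0 < eps -> exists N0, forall N, (N0 <= N)%nat ->
       exists t, tnorm2 (osub (nat * nat) Cop (psum r X Y N)) t /\ t < eps).

Definition cross_state (rho : op (nat * nat)) : Prop := density2 rho /\ cross rho.

(* Main.v *)
Require Import Defs.
From Stdlib Require Import Reals Lra Lia Arith Cantor FunctionalExtensionality Classical.
From Coquelicot Require Import Coquelicot.
Open Scope R_scope.

Lemma Ceq (x y : C) : fst x = fst y -> snd x = snd y -> x = y.
Proof. destruct x, y; simpl; intros; subst; auto. Qed.

Ltac cunf := unfold Cminus, Copp, Cplus, Cmult, Cconj, RtoC, Re, Im in *; cbn [fst snd] in *.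

Lemma sum_single (f : nat -> R) k : (forall m, m <> k -> f m = 0) ->
  forall n, sum_f_R0 f n = if Nat.leb k n then f k else 0.
Proof.
  intros H n; induction n as [|n IH]; simpl.
  - destruct k as [|k]; simpl; [reflexivity|]. apply H; lia.
  - rewrite IH. destruct (le_lt_dec k n) as [h|h].
    + rewrite (proj2 (Nat.leb_le k n) h), (proj2 (Nat.leb_le k (S n))) by lia.
      rewrite (H (S n)) by lia; ring.
    + rewrite (proj2 (Nat.leb_gt k n) h). destruct (Nat.eq_dec k (S n)) as [->|h'].
      * rewrite Nat.leb_refl; ring.
      * rewrite (proj2 (Nat.leb_gt k (S n))) by lia. rewrite (H (S n)) by lia; ring.
Qed.

Lemma single_series (f : nat -> R) k : (forall m, m <> k -> f m = 0) -> is_series f (f k).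
Proof.
  intros H. apply is_series_Reals. intros eps Heps. exists k. intros n Hn.
  rewrite (sum_single f k H). destruct (Nat.leb k n) eqn:E.
  - unfold R_dist. rewrite Rminus_diag, Rabs_R0; auto.
  - apply Nat.leb_gt in E; lia.
Qed.

Lemma series_single (f : nat -> R) k v : (forall m, m <> k -> f m = 0) -> f k = v -> Series f = v.
Proof. intros H <-. apply is_series_unique, single_series; auto. Qed.

Lemma series_zero : Series (fun _ => 0) = 0.
Proof. apply (series_single _ 0); auto. Qed.

Lemma is_series_zero : is_series (fun _ => 0) 0.
Proof. apply (single_series (fun _ => 0) 0); auto. Qed.

Lemma psum_le_series (f : nat -> R) : (forall n, 0 <= f n) -> ex_series f ->
  forall N, sum_f_R0 f N <= Series f.
Proof.
  intros Hp Hs N. apply growing_ineq.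
  - intro n; simpl. specialize (Hp (S n)); lra.
  - apply is_series_Reals, Series_correct, Hs.
Qed.

Lemma term_le_series (f : nat -> R) : (forall n, 0 <= f n) -> ex_series f ->
  forall k, f k <= Series f.
Proof.
  intros Hp Hs k. eapply Rle_trans; [|apply (psum_le_series f Hp Hs k)].
  destruct k; simpl; [lra|]. assert (0 <= sum_f_R0 f k).
  { apply cond_pos_sum; auto. } lra.
Qed.


Lemma ex_series_lin (a b : nat -> R) c d : ex_series a -> ex_series b ->
  ex_series (fun n => c * a n + d * b n).
Proof.
  intros [la Ha] [lb Hb]. exists (c * la + d * lb).
  apply (is_series_plus (fun n => c * a n) (fun n => d * b n)).
  - apply (is_series_scal_l c a la Ha).
  - apply (is_series_scal_l d b lb Hb).
Qed.

Lemma Series_lin (a b : nat -> R) c d : ex_series a -> ex_series b ->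
  Series (fun n => c * a n + d * b n) = c * Series a + d * Series b.
Proof.
  intros Ha Hb. rewrite Series_plus.
  - rewrite !Series_scal_l; auto.
  - destruct Ha as [la Ha]; exists (c * la); apply (is_series_scal_l c a la Ha).
  - destruct Hb as [lb Hb]; exists (d * lb); apply (is_series_scal_l d b lb Hb).
Qed.

Lemma ex_series_bound (a b : nat -> R) : (forall n, Rabs (a n) <= b n) -> ex_series b -> ex_series a.
Proof. intros H Hb. apply (ex_series_le a b); auto. Qed.

Lemma Cmod2 z : Cmod z ^ 2 = fst z ^ 2 + snd z ^ 2.
Proof. apply Cmod2_alt. Qed.

Fixpoint rsum (f : nat -> R) (N : nat) : R :=
  match N with O => 0 | S n => rsum f n + f n end.

Lemma rsum_sum f n : rsum f (S n) = sum_f_R0 f n.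
Proof. induction n; simpl in *; [ring|]. rewrite <- IHn; simpl; ring. Qed.

Lemma rsum_ge0 f N : (forall n, 0 <= f n) -> 0 <= rsum f N.
Proof. intros H; induction N; simpl; [lra|]. specialize (H N); lra. Qed.

Lemma rsum_le f g N : (forall n, f n <= g n) -> rsum f N <= rsum g N.
Proof. intros H; induction N; simpl; [lra|]. specialize (H N); lra. Qed.

Lemma rsum_scal f c N : rsum (fun n => c * f n) N = c * rsum f N.
Proof. induction N; simpl; [ring|]. rewrite IHN; ring. Qed.

Lemma rsum_plus f g N : rsum (fun n => f n + g n) N = rsum f N + rsum g N.
Proof. induction N; simpl; [ring|]. rewrite IHN; ring. Qed.

Lemma rsum_le_series f N : (forall n, 0 <= f n) -> ex_series f -> rsum f N <= Series f.
Proof.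
  intros Hp Hs. destruct N.
  - simpl. apply Rle_trans with (f 0%nat); [apply Hp|]. apply term_le_series; auto.
  - rewrite rsum_sum. apply psum_le_series; auto.
Qed.

Lemma rsum_le_is_series f N t : (forall n, 0 <= f n) -> is_series f t -> rsum f N <= t.
Proof.
  intros Hp Hs. rewrite <- (is_series_unique _ _ Hs). apply rsum_le_series; auto.
  exists t; auto.
Qed.

Lemma term_le_is_series f k t : (forall n, 0 <= f n) -> is_series f t -> f k <= t.
Proof.
  intros Hp Hs. rewrite <- (is_series_unique _ _ Hs). apply term_le_series; auto.
  exists t; auto.
Qed.

Lemma quad_lemma A q Cc : 0 <= A -> 0 <= Cc -> 0 <= q ->
  (forall l, 0 <= A - 2 * l * q + l * l * q * Cc) -> q <= A * Cc.
Proof.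
  intros HA HC Hq H. destruct (Rle_lt_or_eq_dec 0 Cc HC) as [Cp|C0].
  - specialize (H (/ Cc)).
    assert (E : A - 2 * / Cc * q + / Cc * / Cc * q * Cc = A - q / Cc) by (field; lra).
    rewrite E in H. apply Rmult_le_reg_r with (/ Cc).
    + apply Rinv_0_lt_compat; auto.
    + replace (A * Cc * / Cc) with A by (field; lra). unfold Rdiv in H. lra.
  - subst Cc. destruct (Rle_lt_or_eq_dec 0 q Hq) as [qp|q0]; [|subst; lra].
    specialize (H ((A + 1) / (2 * q))).
    replace (A - 2 * ((A + 1) / (2 * q)) * q + (A + 1) / (2 * q) * ((A + 1) / (2 * q)) * q * 0)
      with (-1) in H by (field; lra). lra.
Qed.

Lemma Series_lin_m (a b : nat -> R) c d : ex_series a -> ex_series b ->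
  Series (fun n => c * a n - d * b n) = c * Series a - d * Series b.
Proof.
  intros Ha Hb. replace (c * Series a - d * Series b) with (c * Series a + (- d) * Series b) by ring.
  rewrite <- Series_lin by auto. apply Series_ext; intro; ring.
Qed.

Section Gen.
Variables (I : Type) (en : nat -> I) (dec : forall a b : I, {a = b} + {a <> b}) (idx : I -> nat).
Hypotheses (Hen1 : forall i, en (idx i) = i) (Hen2 : forall n, idx (en n) = n).

Notation E := (ebasis I dec).
Notation L2 := (l2 I en).
Notation IP := (ip I en).

Lemma E_same a : E a a = RtoC 1.
Proof. unfold ebasis; destruct (dec a a); congruence. Qed.
Lemma E_diff a b : a <> b -> E a b = RtoC 0.
Proof. unfold ebasis; destruct (dec a b); congruence. Qed.
Lemma en_ne a m : m <> idx a -> en m <> a.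
Proof. intros H H'. apply H. rewrite <- H', Hen2; auto. Qed.

Lemma ip_E_l a v : IP (E a) v = v a.
Proof.
  unfold ip. apply Ceq; simpl.
  - apply (series_single _ (idx a)).
    + intros m Hm. rewrite E_diff by (intro h; apply (en_ne a m Hm); auto). cunf; ring.
    + rewrite Hen1, E_same. cunf; ring.
  - apply (series_single _ (idx a)).
    + intros m Hm. rewrite E_diff by (intro h; apply (en_ne a m Hm); auto). cunf; ring.
    + rewrite Hen1, E_same. cunf; ring.
Qed.

Lemma ip_E_r v a : IP v (E a) = Cconj (v a).
Proof.
  unfold ip. apply Ceq; simpl.
  - apply (series_single _ (idx a)).
    + intros m Hm. rewrite E_diff by (intro h; apply (en_ne a m Hm); auto). cunf; ring.
    + rewrite Hen1, E_same. cunf; ring.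
  - apply (series_single _ (idx a)).
    + intros m Hm. rewrite E_diff by (intro h; apply (en_ne a m Hm); auto). cunf; ring.
    + rewrite Hen1, E_same. cunf; ring.
Qed.

Lemma l2_E a : L2 (E a).
Proof.
  unfold l2. eexists. apply (single_series _ (idx a)).
  intros m Hm. rewrite E_diff by (intro h; apply (en_ne a m Hm); auto).
  rewrite Cmod_0; ring.
Qed.

Lemma ip_sym x y : IP y x = Cconj (IP x y).
Proof.
  unfold ip. apply Ceq; simpl.
  - apply Series_ext; intro n; cunf; ring.
  - rewrite <- Series_opp. apply Series_ext; intro n; cunf; ring.
Qed.

Lemma l2_zero : L2 (fun _ => RtoC 0).
Proof.
  unfold l2. eexists. apply (single_series _ 0). intros; rewrite Cmod_0; ring.
Qed.

Lemma l2_add x y : L2 x -> L2 y -> L2 (vadd I x y).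
Proof.
  intros Hx Hy. unfold l2 in *.
  apply (ex_series_bound _ (fun n => 2 * (Cmod (x (en n)))^2 + 2 * (Cmod (y (en n)))^2)).
  - intro n. unfold vadd. rewrite !Cmod2. destruct (x (en n)) as [a b], (y (en n)) as [c d]; cunf.
    simpl. pose proof (Rle_0_sqr (a - c)); pose proof (Rle_0_sqr (b - d)); pose proof (Rle_0_sqr (a + c)); pose proof (Rle_0_sqr (b + d)); unfold Rsqr in *. rewrite Rabs_right by lra. nra.
  - apply ex_series_lin; auto.
Qed.

Lemma l2_scal c x : L2 x -> L2 (vscal I c x).
Proof.
  intros Hx. unfold l2 in *.
  apply (ex_series_bound _ (fun n => (Cmod c)^2 * (Cmod (x (en n)))^2 + 0 * (Cmod (x (en n)))^2)).
  - intro n. unfold vscal. rewrite Cmod_mult. rewrite Rabs_right.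
    + right; ring.
    + apply Rle_ge. apply pow_le. apply Rmult_le_pos; apply Cmod_ge_0.
  - apply ex_series_lin; auto.
Qed.

Lemma ex_re x y : L2 x -> L2 y -> ex_series (fun n => Re (Cmult (Cconj (x (en n))) (y (en n)))).
Proof.
  intros Hx Hy. unfold l2 in *.
  apply (ex_series_bound _ (fun n => /2 * (Cmod (x (en n)))^2 + /2 * (Cmod (y (en n)))^2)).
  - intro n. rewrite !Cmod2. destruct (x (en n)) as [a b], (y (en n)) as [c d]; cunf.
    simpl. pose proof (Rle_0_sqr (a - c)); pose proof (Rle_0_sqr (b - d)); pose proof (Rle_0_sqr (a + c)); pose proof (Rle_0_sqr (b + d)); pose proof (Rle_0_sqr (a - d)); pose proof (Rle_0_sqr (b - c)); pose proof (Rle_0_sqr (a + d)); pose proof (Rle_0_sqr (b + c)); unfold Rsqr in *. apply Rabs_le; split; nra.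
  - apply ex_series_lin; auto.
Qed.

Lemma ex_im x y : L2 x -> L2 y -> ex_series (fun n => Im (Cmult (Cconj (x (en n))) (y (en n)))).
Proof.
  intros Hx Hy. unfold l2 in *.
  apply (ex_series_bound _ (fun n => /2 * (Cmod (x (en n)))^2 + /2 * (Cmod (y (en n)))^2)).
  - intro n. rewrite !Cmod2. destruct (x (en n)) as [a b], (y (en n)) as [c d]; cunf.
    simpl. pose proof (Rle_0_sqr (a - c)); pose proof (Rle_0_sqr (b - d)); pose proof (Rle_0_sqr (a + c)); pose proof (Rle_0_sqr (b + d)); pose proof (Rle_0_sqr (a - d)); pose proof (Rle_0_sqr (b - c)); pose proof (Rle_0_sqr (a + d)); pose proof (Rle_0_sqr (b + c)); unfold Rsqr in *. apply Rabs_le; split; nra.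
  - apply ex_series_lin; auto.
Qed.

Lemma ip_add2 x y z : L2 x -> L2 y -> L2 z -> IP x (vadd I y z) = Cplus (IP x y) (IP x z).
Proof.
  intros Hx Hy Hz. unfold ip. apply Ceq; cbn [fst snd Cplus].
  - rewrite <- Series_plus by (apply ex_re; auto).
    apply Series_ext; intro n; unfold vadd; cunf; ring.
  - rewrite <- Series_plus by (apply ex_im; auto).
    apply Series_ext; intro n; unfold vadd; cunf; ring.
Qed.

Lemma ip_scal2 c x y : L2 x -> L2 y -> IP x (vscal I c y) = Cmult c (IP x y).
Proof.
  intros Hx Hy. unfold ip. apply Ceq; cbn [fst snd Cmult].
  - rewrite <- Series_lin_m by (first [apply ex_re; auto | apply ex_im; auto]).
    apply Series_ext; intro n; unfold vscal; cunf; ring.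
  - rewrite <- Series_lin by (first [apply ex_re; auto | apply ex_im; auto]).
    apply Series_ext; intro n; unfold vscal; cunf; ring.
Qed.

Lemma ip_add1 x y z : L2 x -> L2 y -> L2 z -> IP (vadd I x y) z = Cplus (IP x z) (IP y z).
Proof.
  intros. rewrite ip_sym, ip_add2 by auto. rewrite (ip_sym x z), (ip_sym y z).
  destruct (IP z x), (IP z y); apply Ceq; cunf; ring.
Qed.

Lemma ip_scal1 c x y : L2 x -> L2 y -> IP (vscal I c x) y = Cmult (Cconj c) (IP x y).
Proof.
  intros. rewrite ip_sym, ip_scal2 by auto. rewrite (ip_sym x y).
  destruct (IP y x), c; apply Ceq; cunf; ring.
Qed.

Lemma ip_self x : L2 x -> IP x x = RtoC (Series (fun n => Cmod (x (en n)) ^ 2)).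
Proof.
  intros Hx. unfold ip. apply Ceq; cbn [fst snd RtoC].
  - apply Series_ext; intro n. rewrite Cmod2. destruct (x (en n)); cunf; ring.
  - rewrite <- series_zero. apply Series_ext; intro n. destruct (x (en n)); cunf; ring.
Qed.

Lemma bop_l2 A x : Defs.bop I en A -> L2 x -> L2 (A x).
Proof. intros [_ [H _]] Hx. auto. Qed.

Lemma lin_zero A : Defs.bop I en A -> forall i, A (fun _ => RtoC 0) i = RtoC 0.
Proof.
  intros [HA _] i. pose proof (HA _ _ (RtoC 1) l2_zero l2_zero i) as H.
  assert (E0 : vadd I (fun _ => RtoC 0) (vscal I (RtoC 1) (fun _ => RtoC 0)) = (fun _ => RtoC 0)).
  { apply functional_extensionality; intro; apply Ceq; unfold vadd, vscal; cunf; ring. }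
  rewrite E0 in H. destruct (A (fun _ => RtoC 0) i) as [p q]. 
  apply (f_equal fst) in H as H1. apply (f_equal snd) in H as H2. cunf.
  apply Ceq; cunf; lra.
Qed.

Lemma lin_comb A x y a : Defs.bop I en A -> L2 x -> L2 y ->
  A (vadd I x (vscal I a y)) = vadd I (A x) (vscal I a (A y)).
Proof.
  intros [HA _] Hx Hy. apply functional_extensionality; intro i. apply HA; auto.
Qed.

Lemma quad P u v a : Defs.bop I en P -> L2 u -> L2 v ->
  IP (vadd I u (vscal I a v)) (P (vadd I u (vscal I a v))) =
  Cplus (Cplus (Cplus (IP u (P u)) (Cmult a (IP u (P v)))) (Cmult (Cconj a) (IP v (P u))))
        (Cmult (Cmult (Cconj a) a) (IP v (P v))).
Proof.
  intros HP Hu Hv. rewrite lin_comb by auto.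
  assert (Hpu := bop_l2 P u HP Hu). assert (Hpv := bop_l2 P v HP Hv).
  assert (Hav := l2_scal a v Hv). assert (Hapv := l2_scal a (P v) Hpv).
  assert (Hs := l2_add _ _ Hpu Hapv).
  rewrite ip_add1 by auto. rewrite ip_scal1 by auto.
  rewrite !ip_add2 by auto. rewrite !ip_scal2 by auto.
  destruct (IP u (P u)), (IP u (P v)), (IP v (P u)), (IP v (P v)), a.
  apply Ceq; cunf; ring.
Qed.

Lemma herm P u v : Defs.bop I en P -> Defs.positive I en P -> L2 u -> L2 v ->
  IP u (P v) = Cconj (IP v (P u)).
Proof.
  intros HP Hpos Hu Hv.
  assert (Q1 := quad P u v (RtoC 1) HP Hu Hv).
  assert (Q2 := quad P u v (0, 1) HP Hu Hv).
  destruct (Hpos _ (l2_add _ _ Hu (l2_scal (RtoC 1) _ Hv))) as [I1 _].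
  destruct (Hpos _ (l2_add _ _ Hu (l2_scal (0, 1) _ Hv))) as [I2 _].
  destruct (Hpos _ Hu) as [Iu _]. destruct (Hpos _ Hv) as [Iv _].
  rewrite Q1 in I1. rewrite Q2 in I2.
  destruct (IP u (P u)) as [a1 a2], (IP u (P v)) as [s1 s2], (IP v (P u)) as [w1 w2], (IP v (P v)) as [b1 b2].
  cunf. apply Ceq; cunf; nra.
Qed.

Lemma entry_cs P a b : Defs.bop I en P -> Defs.positive I en P ->
  Cmod (P (E b) a) ^ 2 <= Re (IP (E a) (P (E a))) * Re (IP (E b) (P (E b))).
Proof.
  intros HP Hpos.
  assert (Hs : P (E b) a = IP (E a) (P (E b))) by (rewrite ip_E_l; auto).
  assert (Hw : IP (E b) (P (E a)) = Cconj (IP (E a) (P (E b)))) by (apply herm; auto; apply l2_E).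
  destruct (Hpos _ (l2_E a)) as [_ Ha]. destruct (Hpos _ (l2_E b)) as [_ Hb].
  apply quad_lemma; auto. apply pow2_ge_0.
  intro l. destruct (Hpos _ (l2_add _ _ (l2_E a) (l2_scal (- l * fst (IP (E a) (P (E b))), l * snd (IP (E a) (P (E b)))) _ (l2_E b)))) as [_ Hq].
  rewrite quad in Hq by (auto; apply l2_E). rewrite Hw in Hq. rewrite Hs, Cmod2.
  destruct (IP (E a) (P (E a))) as [a1 a2], (IP (E a) (P (E b))) as [s1 s2], (IP (E b) (P (E b))) as [b1 b2].
  cunf. lra.
Qed.

Lemma core A t : tnorm I en dec A t -> exists d : I -> R,
  (forall b, 0 <= d b) /\ is_series (fun n => d (en n)) t /\
  (forall b, Series (fun m => Cmod (A (E b) (en m)) ^ 2) <= d b * t).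
Proof.
  intros [HA [B [P [[HB Hadj] [HP [Hpos [HPP Htr]]]]]]].
  exists (fun b => Re (IP (E b) (P (E b)))). split; [|split].
  - intro b. apply (Hpos _ (l2_E b)).
  - exact Htr.
  - intro b.
    assert (Hw : L2 (P (E b))) by (apply bop_l2; auto; apply l2_E).
    assert (Hae : L2 (A (E b))) by (apply bop_l2; auto; apply l2_E).
    assert (K : IP (A (E b)) (A (E b)) = IP (P (E b)) (P (E b))).
    { rewrite <- Hadj by auto using l2_E. rewrite ip_E_r.
      rewrite <- HPP by apply l2_E. rewrite <- ip_E_l.
      rewrite (herm P (E b) (P (E b))) by auto using l2_E.
      destruct (IP (P (E b)) (P (E b))); apply Ceq; cunf; ring. }
    rewrite !ip_self in K by auto. apply (f_equal fst) in K. cbn [fst RtoC] in K.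
    rewrite K.
    apply Rle_trans with (Series (fun m => Re (IP (E (en m)) (P (E (en m)))) * Re (IP (E b) (P (E b))))).
    + apply Series_le.
      * intro n. split; [apply pow2_ge_0|]. apply entry_cs; auto.
      * apply ex_series_scal_r. exists t; exact Htr.
    + right. rewrite Series_scal_r. rewrite (is_series_unique _ _ Htr). ring.
Qed.

Lemma tnorm_bop A t : tnorm I en dec A t -> Defs.bop I en A.
Proof. intros [H _]; auto. Qed.

Lemma entry_bound A t : tnorm I en dec A t -> forall a b, Cmod (A (E b) a) <= t.
Proof.
  intros Ht a b. destruct (core A t Ht) as [d [Hd [Hs Hb]]].
  assert (Hl : L2 (A (E b))) by (apply bop_l2; [eapply tnorm_bop; eauto| apply l2_E]).
  assert (H1 : Cmod (A (E b) (en (idx a))) ^ 2 <= Series (fun m => Cmod (A (E b) (en m)) ^ 2)).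
  { apply (term_le_series (fun m => Cmod (A (E b) (en m)) ^ 2)); auto. intro; apply pow2_ge_0. }
  rewrite Hen1 in H1. specialize (Hb b).
  assert (H2 : d (en (idx b)) <= t) by (apply (term_le_is_series (fun n => d (en n))); auto).
  rewrite Hen1 in H2. assert (Hdb := Hd b). assert (Hc := Cmod_ge_0 (A (E b) a)).
  simpl in *. nra.
Qed.

Lemma hs_bound A t N : tnorm I en dec A t ->
  rsum (fun k => rsum (fun j => Cmod (A (E (en k)) (en j)) ^ 2) N) N <= t * t.
Proof.
  intros Ht. destruct (core A t Ht) as [d [Hd [Hs Hb]]].
  assert (t0 : 0 <= t).
  { rewrite <- (is_series_unique _ _ Hs). apply Rle_trans with (d (en 0%nat)); auto.
    apply (term_le_series (fun n => d (en n))); auto. exists t; auto. }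
  apply Rle_trans with (rsum (fun k => t * d (en k)) N).
  - apply rsum_le. intro k.
    assert (Hl : L2 (A (E (en k)))) by (apply bop_l2; [eapply tnorm_bop; eauto| apply l2_E]).
    eapply Rle_trans; [apply (rsum_le_series (fun j => Cmod (A (E (en k)) (en j)) ^ 2))|].
    + intro; apply pow2_ge_0.
    + exact Hl.
    + rewrite Rmult_comm. apply Hb.
  - rewrite rsum_scal. apply Rmult_le_compat_l; auto. apply rsum_le_is_series; auto.
Qed.

End Gen.

Fixpoint csum (f : nat -> C) (N : nat) : C :=
  match N with O => RtoC 0 | S n => Cplus (csum f n) (f n) end.

Lemma Cmod_csum f N : Cmod (csum f N) <= rsum (fun n => Cmod (f n)) N.
Proof.
  induction N; simpl.
  - rewrite Cmod_0; lra.
  - eapply Rle_trans; [apply Cmod_triangle|]. lra.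
Qed.

Lemma csum_plus f g N : csum (fun n => Cplus (f n) (g n)) N = Cplus (csum f N) (csum g N).
Proof.
  induction N; simpl. - apply Ceq; cunf; ring.
  - rewrite IHN. destruct (csum f N), (csum g N), (f N), (g N); apply Ceq; cunf; ring.
Qed.

Lemma csum_scal c f N : csum (fun n => Cmult c (f n)) N = Cmult c (csum f N).
Proof.
  induction N; simpl. - apply Ceq; cunf; ring.
  - rewrite IHN. destruct (csum f N), (f N), c; apply Ceq; cunf; ring.
Qed.

Lemma csum_minus f g N : csum (fun n => Cminus (f n) (g n)) N = Cminus (csum f N) (csum g N).
Proof.
  induction N; simpl. - apply Ceq; cunf; ring.
  - rewrite IHN. destruct (csum f N), (csum g N), (f N), (g N); apply Ceq; cunf; ring.
Qed.

Lemma csum_real f N : csum (fun n => RtoC (f n)) N = RtoC (rsum f N).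
Proof.
  induction N; simpl. - reflexivity.
  - rewrite IHN. apply Ceq; cunf; ring.
Qed.

Lemma rsum_double_const (g : nat -> nat -> R) N c :
  (forall m n, g m n <= c) -> rsum (fun m => rsum (fun n => g m n) N) N <= INR N * INR N * c.
Proof.
  intros H. apply Rle_trans with (rsum (fun m => rsum (fun n => c) N) N).
  - apply rsum_le; intro; apply rsum_le; intro; auto.
  - assert (E : forall k c', rsum (fun _ => c') k = INR k * c').
    { induction k; intro c'; simpl rsum; [simpl; ring|]. rewrite IHk, S_INR; ring. }
    rewrite !E. right; ring.
Qed.

Definition e1 := ebasis nat nat_dec.
Definition e2 := ebasis (nat * nat) pair_dec.

Definition phi (M : op (nat * nat)) (N : nat) : C :=
  csum (fun m => csum (fun n => M (e2 (m, m)) (n, n)) N) N.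

Lemma tens_entry X Y m n : Defs.bop nat (fun k => k) X -> Defs.bop nat (fun k => k) Y ->
  tens X Y (e2 (m, m)) (n, n) = Cmult (X (e1 m) n) (Y (e1 m) n).
Proof.
  intros HX HY. unfold tens.
  assert (Erow : (fun i' => Y (fun j' => e2 (m, m) (i', j')) n) = vscal nat (Y (e1 m) n) (e1 m)).
  { apply functional_extensionality; intro i'. unfold vscal.
    destruct (Nat.eq_dec i' m) as [->|hne].
    - assert (R1 : (fun j' => e2 (m, m) (m, j')) = e1 m).
      { apply functional_extensionality; intro j'. unfold e2, e1, ebasis.
        destruct (pair_dec (m, m) (m, j')) as [h|h]; destruct (nat_dec m j') as [h'|h'];
          try reflexivity.
        - inversion h; congruence.
        - subst; congruence. }
      rewrite R1. unfold e1, ebasis. destruct (nat_dec m m); [|congruence].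
      destruct (Y (ebasis nat nat_dec m) n); apply Ceq; cunf; ring.
    - assert (R0 : (fun j' => e2 (m, m) (i', j')) = (fun _ => RtoC 0)).
      { apply functional_extensionality; intro j'. unfold e2, ebasis.
        destruct (pair_dec (m, m) (i', j')) as [h|h]; [inversion h; congruence|reflexivity]. }
      rewrite R0. rewrite (lin_zero nat (fun k => k) Y HY).
      unfold e1, ebasis. destruct (nat_dec m i'); [congruence|].
      apply Ceq; cunf; ring. }
  rewrite Erow.
  assert (Hl : l2 nat (fun k => k) (e1 m)) by (apply (l2_E nat (fun k => k) nat_dec (fun k => k)); auto).
  destruct HX as [HXl HXb].
  pose proof (HXl (fun _ => RtoC 0) (e1 m) (Y (e1 m) n) (l2_zero nat (fun k => k)) Hl n) as H.
  assert (E0 : vadd nat (fun _ => RtoC 0) (vscal nat (Y (e1 m) n) (e1 m)) = vscal nat (Y (e1 m) n) (e1 m)).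
  { apply functional_extensionality; intro; unfold vadd; apply Ceq; cunf; ring. }
  rewrite E0 in H. rewrite H.
  rewrite (lin_zero nat (fun k => k) X (conj HXl HXb)).
  destruct (X (e1 m) n), (Y (e1 m) n); apply Ceq; cunf; ring.
Qed.

Lemma csum_ext f g N : (forall n, f n = g n) -> csum f N = csum g N.
Proof. intros H; induction N; simpl; [reflexivity|]. rewrite IHN, H; reflexivity. Qed.

Lemma rsum_ext f g N : (forall n, f n = g n) -> rsum f N = rsum g N.
Proof. intros H; induction N; simpl; [reflexivity|]. rewrite IHN, H; reflexivity. Qed.

Lemma tnorm_nonneg1 X a : tnorm1 X a -> 0 <= a.
Proof.
  intros H. eapply Rle_trans; [apply (Cmod_ge_0 (X (e1 0%nat) 0%nat))|].
  apply (entry_bound nat (fun k => k) nat_dec (fun k => k)); auto.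
Qed.

Lemma prod_bound X Y a b N : tnorm1 X a -> tnorm1 Y b -> a * b = 1 ->
  Cmod (csum (fun m => csum (fun n => Cmult (X (e1 m) n) (Y (e1 m) n)) N) N) <= 1.
Proof.
  intros HX HY Hab.
  assert (a0 := tnorm_nonneg1 X a HX). assert (b0 := tnorm_nonneg1 Y b HY).
  assert (ap : 0 < a) by (destruct (Rle_lt_or_eq_dec 0 a a0) as [h|h]; [auto|subst; lra]).
  assert (bp : 0 < b) by (destruct (Rle_lt_or_eq_dec 0 b b0) as [h|h]; [auto|subst; lra]).
  set (l := b / a). assert (lp : 0 < l) by (unfold l; apply Rdiv_lt_0_compat; auto).
  assert (SX := hs_bound nat (fun k => k) nat_dec (fun k => k) (fun _ => eq_refl) (fun _ => eq_refl) X a N HX).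
  assert (SY := hs_bound nat (fun k => k) nat_dec (fun k => k) (fun _ => eq_refl) (fun _ => eq_refl) Y b N HY).
  cbv beta in SX, SY. fold e1 in SX, SY.
  eapply Rle_trans; [apply Cmod_csum|].
  eapply Rle_trans; [apply rsum_le; intro m; apply Cmod_csum|].
  eapply Rle_trans.
  { apply rsum_le; intro m; apply rsum_le; intro n.
    rewrite Cmod_mult.
    assert (H : forall x y, 0 <= x -> 0 <= y -> x * y <= l / 2 * x ^ 2 + / (2 * l) * y ^ 2).
    { intros x y hx hy. assert (0 <= (l * x - y) ^ 2) by apply pow2_ge_0.
      apply Rmult_le_reg_l with (2 * l); [lra|].
      replace (2 * l * (l / 2 * x ^ 2 + / (2 * l) * y ^ 2)) with (l * l * x ^ 2 + y ^ 2) by (field; lra).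
      nra. }
    apply H; apply Cmod_ge_0. }
  rewrite (rsum_ext _ (fun m => l / 2 * rsum (fun n => Cmod (X (e1 m) n) ^ 2) N +
                               / (2 * l) * rsum (fun n => Cmod (Y (e1 m) n) ^ 2) N)).
  2: { intro m. rewrite rsum_plus, !rsum_scal. reflexivity. }
  rewrite rsum_plus, !rsum_scal.
  apply Rle_trans with (l / 2 * (a * a) + / (2 * l) * (b * b)).
  - apply Rplus_le_compat; apply Rmult_le_compat_l; auto.
    + lra.
    + left; apply Rinv_0_lt_compat; lra.
  - unfold l. replace (b / a / 2 * (a * a) + / (2 * (b / a)) * (b * b)) with (a * b) by (field; lra).
    lra.
Qed.

Lemma phi_lin (M1 M2 : op (nat * nat)) c N :
  phi (fun x p => Cplus (M1 x p) (Cmult c (M2 x p))) N = Cplus (phi M1 N) (Cmult c (phi M2 N)).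
Proof.
  unfold phi. rewrite <- csum_scal, <- csum_plus. apply csum_ext; intro m.
  rewrite <- csum_scal, <- csum_plus. reflexivity.
Qed.

Lemma phi_osub (M1 M2 : op (nat * nat)) N :
  phi (osub (nat * nat) M1 M2) N = Cminus (phi M1 N) (phi M2 N).
Proof.
  unfold phi, osub. rewrite <- csum_minus. apply csum_ext; intro m.
  rewrite <- csum_minus. reflexivity.
Qed.

Lemma phi_tens X Y a b N : tnorm1 X a -> tnorm1 Y b -> a * b = 1 -> Cmod (phi (tens X Y) N) <= 1.
Proof.
  intros HX HY Hab. unfold phi.
  rewrite (csum_ext _ (fun m => csum (fun n => Cmult (X (e1 m) n) (Y (e1 m) n)) N)).
  - eapply prod_bound; eauto.
  - intro m. apply csum_ext; intro n. apply tens_entry.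
    + destruct HX; auto.
    + destruct HY; auto.
Qed.

Lemma phi_psum r X Y K N : (forall k, 0 <= r k) ->
  (forall k, exists a b, tnorm1 (X k) a /\ tnorm1 (Y k) b /\ a * b = 1) ->
  Cmod (phi (psum r X Y K) N) <= rsum r K.
Proof.
  intros Hr HXY. induction K.
  - simpl. unfold phi. rewrite (csum_ext _ (fun _ => RtoC 0)).
    + rewrite (csum_real (fun _ => 0)). simpl. 
      assert (forall k, rsum (fun _ => 0) k = 0) as Z by (induction k; simpl; [auto| rewrite IHk; ring]).
      rewrite Z, Cmod_0. lra.
    + intro m. rewrite (csum_real (fun _ => 0)). 
      assert (forall k, rsum (fun _ => 0) k = 0) as Z by (induction k; simpl; [auto| rewrite IHk; ring]).
      rewrite Z; reflexivity.
  - simpl psum. rewrite phi_lin. simpl rsum.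
    eapply Rle_trans; [apply Cmod_triangle|]. rewrite Cmod_mult.
    destruct (HXY K) as [a [b [Ha [Hb Hab]]]].
    assert (T := phi_tens _ _ _ _ N Ha Hb Hab).
    assert (Cmod (RtoC (r K)) = r K).
    { unfold Cmod, RtoC; simpl. rewrite Rmult_0_l, Rplus_0_r, Rmult_1_r.
      rewrite sqrt_square; auto. }
    rewrite H. specialize (Hr K). assert (0 <= Cmod (phi (tens (X K) (Y K)) N)) by apply Cmod_ge_0. nra.
Qed.

Lemma phi_R R t N : tnorm2 R t -> Cmod (phi R N) <= INR N * INR N * t.
Proof.
  intros Ht. unfold phi.
  eapply Rle_trans; [apply Cmod_csum|].
  eapply Rle_trans; [apply rsum_le; intro m; apply Cmod_csum|].
  apply rsum_double_const. intros m n.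
  apply (entry_bound (nat * nat) Cantor.of_nat pair_dec Cantor.to_nat); auto.
  - apply cancel_of_to.
  - apply cancel_to_of.
Qed.

Lemma rsum_zero_range b M d : (forall m, (M <= m < M + d)%nat -> b m = 0) -> rsum b (M + d) = rsum b M.
Proof.
  intros H; induction d.
  - rewrite Nat.add_0_r; auto.
  - rewrite Nat.add_succ_r. simpl. rewrite IHd by (intros; apply H; lia). rewrite H by lia. ring.
Qed.

Lemma rsum_mono b M M' : (forall n, 0 <= b n) -> (M <= M')%nat -> rsum b M <= rsum b M'.
Proof.
  intros Hb HM. induction HM; [lra|]. simpl. specialize (Hb m). lra.
Qed.

Lemma zero_ins (a b : nat -> R) (s : nat -> nat) L :
  (forall k, (s k < s (S k))%nat) -> (forall k, b (s k) = a k) ->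
  (forall m, (forall k, m <> s k) -> b m = 0) -> (forall n, 0 <= a n) ->
  is_series a L -> is_series b L.
Proof.
  intros Hs Hba Hb0 Ha HS.
  assert (mono : forall k k', (k <= k')%nat -> (s k <= s k')%nat).
  { intros k k' H; induction H; [lia|]. specialize (Hs m); lia. }
  assert (ge : forall k, (k <= s k)%nat).
  { induction k; [lia|]. specialize (Hs k); lia. }
  assert (bpos : forall m, 0 <= b m).
  { intro m. destruct (classic (exists k, m = s k)) as [[k ->]|h].
    - rewrite Hba; auto.
    - rewrite Hb0; [lra|]. intros k hk; apply h; eauto. }
  assert (C1 : forall K, rsum b (S (s K)) = rsum a (S K)).
  { induction K.
    - simpl. replace (s 0%nat) with (0 + s 0%nat)%nat by lia.
      rewrite rsum_zero_range. 
      + simpl. rewrite Hba. ring.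
      + intros m hm. apply Hb0. intros k ->. assert (mono0 := mono 0%nat k ltac:(lia)). lia.
    - change (rsum b (S (s (S K)))) with (rsum b (s (S K)) + b (s (S K))).
      replace (s (S K)) with (S (s K) + (s (S K) - S (s K)))%nat at 1 by (specialize (Hs K); lia).
      rewrite rsum_zero_range.
      + rewrite IHK, Hba. simpl. ring.
      + intros m hm. apply Hb0. intros k ->.
        destruct (le_lt_dec k K) as [h|h].
        * assert (hh := mono k K h). lia.
        * assert (hh := mono (S K) k h). lia. }
  apply is_series_Reals. apply is_series_Reals in HS.
  intros eps Heps. destruct (HS eps Heps) as [K0 HK0].
  exists (s K0). intros n Hn.
  assert (up : sum_f_R0 b n <= L).
  { rewrite <- rsum_sum. apply Rle_trans with (rsum b (S (s n))).
    - apply rsum_mono; auto. specialize (ge n); lia.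
    - rewrite C1, rsum_sum. apply sum_incr; auto. }
  assert (lo : sum_f_R0 a K0 <= sum_f_R0 b n).
  { rewrite <- !rsum_sum, <- C1. apply rsum_mono; auto. lia. }
  specialize (HK0 K0 ltac:(lia)). unfold R_dist in *.
  apply Rabs_def2 in HK0. apply Rabs_def1; lra.
Qed.

Lemma ex_series_pos_bounded f M : (forall n, 0 <= f n) -> (forall n, sum_f_R0 f n <= M) -> ex_series f.
Proof.
  intros Hp Hb. apply ex_series_Reals_1. apply growing_cv.
  - intro n; simpl. specialize (Hp (S n)); lra.
  - exists M. intros x [i ->]. auto.
Qed.

Lemma inv_sq_series : ex_series (fun n => (/ INR (S n)) ^ 2).
Proof.
  apply (ex_series_pos_bounded _ 2).
  - intro; apply pow2_ge_0.
  - assert (H : forall n, sum_f_R0 (fun n => (/ INR (S n)) ^ 2) n <= 2 - / INR (S n)).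
    { induction n.
      - simpl. lra.
      - rewrite tech5. rewrite (S_INR (S n)).
        assert (0 < INR (S n)) by (apply lt_0_INR; lia).
        set (u := INR (S n)) in *.
        assert (K : (/ (u + 1)) ^ 2 <= / u - / (u + 1)).
        { replace (/ u - / (u + 1)) with (/ (u * (u + 1))) by (field; lra).
          replace ((/ (u + 1)) ^ 2) with (/ ((u + 1) * (u + 1))) by (field; lra).
          apply Rinv_le_contravar; nra. }
        lra. }
    intro n. specialize (H n). assert (0 < / INR (S n)) by (apply Rinv_0_lt_compat, lt_0_INR; lia). lra.
Qed.

Lemma rsum_S f N : rsum f (S N) = rsum f N + f N.
Proof. reflexivity. Qed.

Lemma harm_ln N : ln (INR N + 1) <= rsum (fun n => / INR (S n)) N.
Proof.
  induction N.
  - simpl. rewrite Rplus_0_l, ln_1. lra.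
  - rewrite rsum_S. rewrite S_INR.
    assert (u0 : 0 < INR N + 1) by (pose proof (pos_INR N); lra).
    set (u := INR N + 1) in *.
    assert (E : u + 1 = u * (1 + / u)) by (field; lra).
    assert (v0 : 0 < / u) by (apply Rinv_0_lt_compat; lra).
    rewrite E. rewrite ln_mult; [|lra|lra].
    assert (ln (1 + / u) < / u).
    { assert (h : / u <> 0) by (apply Rinv_neq_0_compat; lra).
      pose proof (exp_ineq1 (/ u) h). rewrite <- (ln_exp (/ u)) at 2.
      apply ln_increasing; auto. assert (0 < / u) by (apply Rinv_0_lt_compat; lra); lra. }
    replace (INR (S N)) with u by (unfold u; rewrite S_INR; ring). lra.
Qed.

Definition S2 : R := Series (fun n => (/ INR (S n)) ^ 2).
Definition kap : R := / sqrt S2.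
Definition cc (n : nat) : R := kap * / INR (S n).

Lemma S2_pos : 0 < S2.
Proof.
  unfold S2. apply Rlt_le_trans with ((/ INR 1) ^ 2).
  - simpl. lra.
  - apply (term_le_series (fun n => (/ INR (S n)) ^ 2)). intro; apply pow2_ge_0. apply inv_sq_series.
Qed.

Lemma kap_pos : 0 < kap.
Proof. unfold kap. apply Rinv_0_lt_compat, sqrt_lt_R0, S2_pos. Qed.

Lemma cc_pos n : 0 <= cc n.
Proof. unfold cc. assert (0 < / INR (S n)) by (apply Rinv_0_lt_compat, lt_0_INR; lia). pose proof kap_pos. nra. Qed.

Lemma cc_series : is_series (fun n => cc n ^ 2) 1.
Proof.
  replace 1 with (kap ^ 2 * S2).
  - apply (is_series_ext (fun n => (kap ^ 2) * (/ INR (S n)) ^ 2)).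
    + intro n. change (kap ^ 2 * (/ INR (S n)) ^ 2 = cc n ^ 2 :> R). unfold cc; ring.
    + apply (is_series_scal_l (kap ^ 2) (fun n => (/ INR (S n)) ^ 2) S2). apply Series_correct, inv_sq_series.
  - unfold kap. rewrite <- Rinv_pow by (apply Rgt_not_eq, sqrt_lt_R0, S2_pos).
    rewrite pow2_sqrt by (left; apply S2_pos). field. apply Rgt_not_eq, S2_pos.
Qed.

Lemma cc_unbounded M : exists N, M < rsum cc N.
Proof.
  destruct (INR_unbounded (exp (M / kap))) as [N HN]. exists N.
  assert (rsum cc N = kap * rsum (fun n => / INR (S n)) N) by (unfold cc; apply rsum_scal).
  rewrite H. pose proof (harm_ln N). pose proof kap_pos.
  assert (M / kap < ln (INR N + 1)).
  { rewrite <- (ln_exp (M / kap)) at 1. apply ln_increasing; [apply exp_pos|lra]. }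
  apply Rmult_lt_reg_r with (/ kap); [apply Rinv_0_lt_compat; lra|].
  replace (kap * rsum (fun n => / INR (S n)) N * / kap) with (rsum (fun n => / INR (S n)) N) by (field; lra).
  unfold Rdiv in H2. lra.
Qed.

Lemma series_nonneg f : (forall n, 0 <= f n) -> ex_series f -> 0 <= Series f.
Proof.
  intros Hp Hs. rewrite <- series_zero. apply Series_le; auto. intro n; split; [lra|auto].
Qed.

Lemma re_im_bound (I : Type) (en : nat -> I) x y l (sel : bool) : l2 I en x -> l2 I en y -> 0 < l ->
  Rabs (Series (fun n => (if sel then Re else Im) (Cmult (Cconj (x (en n))) (y (en n))))) <=
  (l * Series (fun n => Cmod (x (en n)) ^ 2) + Series (fun n => Cmod (y (en n)) ^ 2) / l) / 2.
Proof.
  intros Hx Hy Hl.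
  set (f := fun n => (if sel then Re else Im) (Cmult (Cconj (x (en n))) (y (en n)))).
  set (g := fun n => (l * Cmod (x (en n)) ^ 2 + Cmod (y (en n)) ^ 2 / l) / 2).
  assert (Hfg : forall n, Rabs (f n) <= g n).
  { intro n. unfold f, g. rewrite !Cmod2. destruct (x (en n)) as [a b], (y (en n)) as [c d].
    apply Rmult_le_reg_l with (2 * l); [lra|].
    replace (2 * l * ((l * (fst (a, b) ^ 2 + snd (a, b) ^ 2) + (fst (c, d) ^ 2 + snd (c, d) ^ 2) / l) / 2))
      with ((l * a) ^ 2 + (l * b) ^ 2 + c ^ 2 + d ^ 2) by (simpl; field; lra).
    pose proof (pow2_ge_0 (l * a - c)); pose proof (pow2_ge_0 (l * b - d));
    pose proof (pow2_ge_0 (l * a + c)); pose proof (pow2_ge_0 (l * b + d));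
    pose proof (pow2_ge_0 (l * a - d)); pose proof (pow2_ge_0 (l * b - c));
    pose proof (pow2_ge_0 (l * a + d)); pose proof (pow2_ge_0 (l * b + c)).
    rewrite <- (Rabs_pos_eq (2 * l)) at 1 by lra. rewrite <- Rabs_mult.
    destruct sel; unfold Cmult, Cconj, Re, Im; cbn [fst snd]; apply Rabs_le; split; nra. }
  assert (Ef : ex_series f) by (unfold f; destruct sel; [apply ex_re|apply ex_im]; auto).
  assert (Eg : ex_series g).
  { unfold g. apply (ex_series_ext (fun n => (l / 2) * Cmod (x (en n)) ^ 2 + (/ (2 * l)) * Cmod (y (en n)) ^ 2)).
    - intro n. change (@eq R (l / 2 * Cmod (x (en n)) ^ 2 + / (2 * l) * Cmod (y (en n)) ^ 2) ((l * Cmod (x (en n)) ^ 2 + Cmod (y (en n)) ^ 2 / l) / 2)). field. lra.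
    - apply ex_series_lin; auto. }
  assert (Sg : Series g = (l * Series (fun n => Cmod (x (en n)) ^ 2) + Series (fun n => Cmod (y (en n)) ^ 2) / l) / 2).
  { unfold g. rewrite (Series_ext _ (fun n => (l / 2) * Cmod (x (en n)) ^ 2 + (/ (2 * l)) * Cmod (y (en n)) ^ 2)).
    - rewrite Series_lin by auto. field; lra.
    - intro n. field; lra. }
  rewrite <- Sg. fold f.
  assert (P1 : 0 <= Series (fun n => 1 * g n + (-1) * f n)).
  { apply series_nonneg; [|apply ex_series_lin; auto]. intro n. specialize (Hfg n).
    apply Rabs_le_between in Hfg. lra. }
  assert (P2 : 0 <= Series (fun n => 1 * g n + 1 * f n)).
  { apply series_nonneg; [|apply ex_series_lin; auto]. intro n. specialize (Hfg n).
    apply Rabs_le_between in Hfg. lra. }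
  rewrite Series_lin in P1, P2 by auto. apply Rabs_le; split; lra.
Qed.

Lemma sqrt_bound r X : 0 <= X -> (forall l, 0 < l -> r <= (l + X / l) / 2) -> r <= sqrt X.
Proof.
  intros HX H. destruct (Rle_lt_or_eq_dec 0 X HX) as [Xp|X0].
  - assert (s0 : 0 < sqrt X) by (apply sqrt_lt_R0; auto).
    specialize (H (sqrt X) s0). 
    assert (E : X / sqrt X = sqrt X).
    { pattern X at 1; rewrite <- (sqrt_sqrt X) by lra. field; lra. }
    rewrite E in H. lra.
  - subst X. rewrite sqrt_0. destruct (Rle_lt_dec r 0) as [h|h]; auto.
    specialize (H r h). unfold Rdiv in H. rewrite Rmult_0_l, Rplus_0_r in H. lra.
Qed.

Lemma Cmod_le_sum z : Cmod z <= Rabs (fst z) + Rabs (snd z).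
Proof.
  unfold Cmod. rewrite <- (sqrt_pow2 (Rabs (fst z) + Rabs (snd z))).
  - apply sqrt_le_1_alt. rewrite <- (pow2_abs (fst z)), <- (pow2_abs (snd z)).
    pose proof (Rabs_pos (fst z)); pose proof (Rabs_pos (snd z)). nra.
  - pose proof (Rabs_pos (fst z)); pose proof (Rabs_pos (snd z)). lra.
Qed.

Lemma ip_bound1 (I : Type) (en : nat -> I) x y : l2 I en x -> l2 I en y ->
  Series (fun n => Cmod (x (en n)) ^ 2) = 1 ->
  Cmod (ip I en x y) <= 2 * sqrt (Series (fun n => Cmod (y (en n)) ^ 2)).
Proof.
  intros Hx Hy H1.
  assert (HY : 0 <= Series (fun n => Cmod (y (en n)) ^ 2)) by (apply series_nonneg; auto; intro; apply pow2_ge_0).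
  eapply Rle_trans; [apply Cmod_le_sum|]. unfold ip; cbn [fst snd].
  assert (A1 := fun l => re_im_bound I en x y l true Hx Hy).
  assert (A2 := fun l => re_im_bound I en x y l false Hx Hy).
  rewrite H1 in A1, A2. simpl in A1, A2.
  assert (B1 : Rabs (Series (fun n => Re (Cmult (Cconj (x (en n))) (y (en n))))) <= sqrt (Series (fun n => Cmod (y (en n)) ^ 2))).
  { apply sqrt_bound; auto. intros l hl. specialize (A1 l hl). rewrite Rmult_1_r in A1. exact A1. }
  assert (B2 : Rabs (Series (fun n => Im (Cmult (Cconj (x (en n))) (y (en n))))) <= sqrt (Series (fun n => Cmod (y (en n)) ^ 2))).
  { apply sqrt_bound; auto. intros l hl. specialize (A2 l hl). rewrite Rmult_1_r in A2. exact A2. }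
  lra.
Qed.

Definition psi : vec (nat * nat) :=
  fun p => if Nat.eq_dec (fst p) (snd p) then RtoC (cc (fst p)) else RtoC 0.

Definition IP2 := ip (nat * nat) Cantor.of_nat.
Definition L22 := l2 (nat * nat) Cantor.of_nat.

Definition rho : op (nat * nat) := fun x p => Cmult (IP2 psi x) (psi p).

Lemma Cmod_RtoC2 r : Cmod (RtoC r) ^ 2 = r ^ 2.
Proof. rewrite Cmod2. simpl. ring. Qed.

Lemma diag_mono k : (to_nat (k, k) < to_nat (S k, S k))%nat.
Proof.
  pose proof (to_nat_spec k k). pose proof (to_nat_spec (S k) (S k)). nia.
Qed.

Lemma psi_series : is_series (fun m => Cmod (psi (of_nat m)) ^ 2) 1.
Proof.
  apply (zero_ins (fun k => cc k ^ 2) _ (fun k => to_nat (k, k))).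
  - apply diag_mono.
  - intro k. rewrite cancel_of_to. unfold psi; simpl. destruct (Nat.eq_dec k k); [|congruence].
    apply Cmod_RtoC2.
  - intros m Hm. unfold psi. destruct (of_nat m) as [i j] eqn:Em. simpl.
    destruct (Nat.eq_dec i j) as [->|h].
    + exfalso. apply (Hm j). rewrite <- Em, cancel_to_of. reflexivity.
    + rewrite Cmod_0. ring.
  - intro; apply pow2_ge_0.
  - apply cc_series.
Qed.

Lemma psi_l2 : L22 psi.
Proof. exists 1. apply psi_series. Qed.

Lemma psi_norm : Series (fun m => Cmod (psi (of_nat m)) ^ 2) = 1.
Proof. apply is_series_unique, psi_series. Qed.

Definition E2 := ebasis (nat * nat) pair_dec.

Lemma ipEl a v : IP2 (E2 a) v = v a.
Proof. apply (ip_E_l (nat * nat) of_nat pair_dec to_nat); [apply cancel_of_to|apply cancel_to_of]. Qed.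
Lemma ipEr v a : IP2 v (E2 a) = Cconj (v a).
Proof. apply (ip_E_r (nat * nat) of_nat pair_dec to_nat); [apply cancel_of_to|apply cancel_to_of]. Qed.
Lemma l2E2 a : L22 (E2 a).
Proof. apply (l2_E (nat * nat) of_nat pair_dec to_nat); apply cancel_to_of. Qed.

Lemma rho_vscal x : rho x = vscal (nat * nat) (IP2 psi x) psi.
Proof. reflexivity. Qed.

Lemma rho_bop : Defs.bop (nat * nat) of_nat rho.
Proof.
  split; [|split].
  - intros x y a Hx Hy i. unfold rho. fold IP2.
    assert (Hay : L22 (vscal _ a y)) by (apply l2_scal; auto).
    unfold IP2. rewrite ip_add2 by (auto; apply psi_l2). rewrite ip_scal2 by (auto; apply psi_l2).
    destruct (ip _ _ psi x), (ip _ _ psi y), a, (psi i). apply Ceq; cunf; ring.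
  - intros x Hx. rewrite rho_vscal. apply l2_scal, psi_l2.
  - exists 2. intros x Hx. unfold l2norm. rewrite rho_vscal.
    rewrite (Series_ext _ (fun n => (Cmod (IP2 psi x)) ^ 2 * Cmod (psi (of_nat n)) ^ 2)).
    2: { intro n. unfold vscal. rewrite Cmod_mult. ring. }
    rewrite Series_scal_l, psi_norm, Rmult_1_r.
    rewrite sqrt_pow2 by apply Cmod_ge_0.
    apply ip_bound1; auto. apply psi_l2. apply psi_norm.
Qed.

Lemma rho_adj : adjoint (nat * nat) of_nat rho rho.
Proof.
  split; [apply rho_bop|]. intros x y Hx Hy. rewrite !rho_vscal.
  unfold IP2. rewrite ip_scal1 by (auto; apply psi_l2). rewrite ip_scal2 by (auto; apply psi_l2).
  rewrite (ip_sym _ _ psi x).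
  destruct (ip _ _ psi x), (ip _ _ psi y). apply Ceq; cunf; ring.
Qed.

Lemma rho_pos : Defs.positive (nat * nat) of_nat rho.
Proof.
  intros x Hx. rewrite rho_vscal. unfold IP2. rewrite ip_scal2 by (auto; apply psi_l2).
  rewrite (ip_sym _ _ psi x). destruct (ip _ _ psi x) as [a b]. cunf. split; [ring|nra].
Qed.

Lemma rho_diag a : rho (E2 a) a = RtoC (Cmod (psi a) ^ 2).
Proof.
  unfold rho. rewrite ipEr. rewrite Cmod2. destruct (psi a). apply Ceq; cunf; ring.
Qed.

Lemma rho_tnorm : tnorm2 rho 1.
Proof.
  split; [apply rho_bop|]. exists rho, rho. split; [apply rho_adj|]. split; [apply rho_bop|].
  split; [apply rho_pos|]. split; [reflexivity|].
  apply (is_series_ext (fun m => Cmod (psi (of_nat m)) ^ 2)); [|apply psi_series].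
  intro n. change (ebasis (nat * nat) pair_dec) with E2. change (ip (nat * nat) of_nat) with IP2.
  rewrite ipEl, rho_diag. reflexivity.
Qed.

Lemma rho_density : density2 rho.
Proof.
  split; [exists 1; apply rho_tnorm|]. split; [apply rho_pos|]. split.
  - apply (is_series_ext (fun m => Cmod (psi (of_nat m)) ^ 2)); [|apply psi_series].
    intro n. change (ebasis (nat * nat) pair_dec) with E2. change (ip (nat * nat) of_nat) with IP2.
    rewrite ipEl, rho_diag. reflexivity.
  - apply (is_series_ext (fun _ => 0)); [|apply is_series_zero].
    intro n. change (ebasis (nat * nat) pair_dec) with E2. change (ip (nat * nat) of_nat) with IP2.
    rewrite ipEl, rho_diag. reflexivity.
Qed.

Lemma phi_rho N : phi rho N = RtoC (rsum cc N * rsum cc N).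
Proof.
  unfold phi. rewrite (csum_ext _ (fun m => RtoC (cc m * rsum cc N))).
  - rewrite csum_real. f_equal.
    rewrite (rsum_ext _ (fun m => rsum cc N * cc m)) by (intro; ring). rewrite rsum_scal. reflexivity.
  - intro m. rewrite (csum_ext _ (fun n => RtoC (cc m * cc n))).
    + rewrite csum_real, rsum_scal. reflexivity.
    + intro n. unfold rho. change (e2 (m, m)) with (E2 (m, m)). rewrite ipEr.
      unfold psi; simpl. destruct (Nat.eq_dec m m); [|congruence]. destruct (Nat.eq_dec n n); [|congruence].
      apply Ceq; cunf; ring.
Qed.

Lemma rho_not_cross : ~ cross rho.
Proof.
  intros [_ [r [X [Y [Hr [Hrs [HXY Hconv]]]]]]].
  assert (Sr0 : 0 <= Series r) by (apply series_nonneg; auto).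
  destruct (cc_unbounded (Series r + 2)) as [N HN].
  assert (HN2 : 0 <= INR N * INR N) by (pose proof (pos_INR N); nra).
  set (eps := / (INR N * INR N + 1)).
  assert (eps0 : 0 < eps) by (unfold eps; apply Rinv_0_lt_compat; lra).
  destruct (Hconv eps eps0) as [N0 HN0]. destruct (HN0 N0 (le_n _)) as [t [Ht Hte]].
  assert (Eo := phi_osub rho (psum r X Y N0) N).
  assert (Ep : phi rho N = Cplus (phi (osub (nat * nat) rho (psum r X Y N0)) N) (phi (psum r X Y N0) N)).
  { rewrite Eo. destruct (phi rho N), (phi (psum r X Y N0) N). apply Ceq; cunf; ring. }
  assert (B1 := phi_R _ t N Ht).
  assert (B2 := phi_psum r X Y N0 N Hr HXY).
  assert (B3 : rsum r N0 <= Series r) by (apply rsum_le_series; auto).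
  assert (T := Cmod_triangle (phi (osub (nat * nat) rho (psum r X Y N0)) N) (phi (psum r X Y N0) N)).
  rewrite <- Ep, phi_rho in T.
  assert (H0 : 0 <= rsum cc N) by (apply rsum_ge0, cc_pos).
  assert (Cmod (RtoC (rsum cc N * rsum cc N)) = rsum cc N * rsum cc N).
  { unfold Cmod, RtoC; simpl. rewrite Rmult_0_l, Rplus_0_r, Rmult_1_r. apply sqrt_square. nra. }
  rewrite H in T.
  assert (K : INR N * INR N * t <= INR N * INR N * eps) by (apply Rmult_le_compat_l; lra).
  assert (K2 : INR N * INR N * eps < 1).
  { unfold eps. apply Rmult_lt_reg_r with (INR N * INR N + 1); [lra|].
    rewrite Rmult_assoc, Rinv_l by lra. lra. }
  nra.
Qed.

Theorem corollary3p31 :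
  ((forall Cop : op (nat * nat), cross Cop -> TC2 Cop) /\
   (exists Cop : op (nat * nat), TC2 Cop /\ ~ cross Cop)) /\
  ((forall rho : op (nat * nat), cross_state rho -> density2 rho) /\
   (exists rho : op (nat * nat), density2 rho /\ ~ cross_state rho)).
Proof.
  split; split.
  - intros Cop [H _]; exact H.
  - exists rho. split; [exists 1; apply rho_tnorm|apply rho_not_cross].
  - intros r [H _]; exact H.
  - exists rho. split; [apply rho_density|]. intros [_ H]. apply rho_not_cross; exact H.
Qed.
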